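(* Let $I,J\subset\mathbb{R}$ be open intervals and $f\colon I\to\mathbb{R}$, $g\colon J\to\mathbb{R}$ smooth functions, let $\alpha(s)=(s,0,f(s))$ (a curve in the plane $\{y=0\}$) and $\beta(t)=(0,t,g(t))$ (a curve in the plane $\{x=0\}$), and consider the translation surface $$x(s,t)=\alpha(s)\ast\beta(t)=(s,\,t\,e^{f(s)},\,f(s)+g(t)),\qquad (s,t)\in I\times J,$$ in $\mathrm{Sol}_3$. This surface is minimal in each of the following cases: (1) $f\equiv a$ is constant and $g(t)=\log|t+\lambda|+\mu$ for constants $\lambda,\mu$ (with $-\lambda\notin J$); (2) $f(s)=-\log|s+\lambda|+\mu$ for constants $\lambda,\mu$ (with $-\lambda\notin I$) and $g\equiv a$ is constant; (3) $g(t)=\log|t|+\mu$ for a constant $\mu$ (with $0\notin J$) and $f$ is an arbitrary smooth function; (4) $f$ and $g$ are both constant (the surface is a piece of a plane $z=z_0$). Moreover, the planes $x=x_0$ are minimal translation surfaces of type III (obtained with $\alpha(s)=(x_0,0,s)$ and $\beta(t)=(0,t,g(t))$, $g$ arbitrary).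
   Context: $\mathrm{Sol}_3$ is $\mathbb{R}^3$ with coordinates $(x,y,z)$, the Riemannian metric $e^{2z}dx^2+e^{-2z}dy^2+dz^2$, and the Lie group operation $(x,y,z)\ast(x',y',z')=(x+e^{-z}x',\,y+e^{z}y',\,z+z')$, for which the metric is left-invariant. A translation surface $M(\alpha,\beta)$ is a surface parametrized by $x(s,t)=\alpha(s)\ast\beta(t)$ where $\alpha,\beta$ are curves lying in coordinate planes of $\mathbb{R}^3$; it is of type III if $\alpha\subset\{y=0\}$ and $\beta\subset\{x=0\}$. A surface is minimal if its mean curvature (half the trace of the Weingarten map, computed with the Levi-Civita connection of the metric above) vanishes identically. *)

(* Defs.v *)
From Stdlib Require Import Reals Lra.
Open Scope R_scope.

Definition V3 : Type := (R * R * R)%type.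

Definition comp (v : V3) (k : nat) : R :=
  match v with (a, b, c) =>
    match k with 0%nat => a | 1%nat => b | _ => c end end.

Definition zc (p : V3) : R := comp p 2.

Definition sum3 (F : nat -> R) : R := F 0%nat + F 1%nat + F 2%nat.

Definition sol_mul (p q : V3) : V3 :=
  match p, q with (x, y, z), (x', y', z') =>
    (x + exp (- z) * x', y + exp z * y', z + z') end.

Definition gm (p : V3) (i j : nat) : R :=
  match i, j with
  | 0%nat, 0%nat => exp (2 * zc p)
  | 1%nat, 1%nat => exp (- (2 * zc p))
  | 2%nat, 2%nat => 1
  | _, _ => 0 end.

Definition ginv (p : V3) (i j : nat) : R :=
  match i, j with
  | 0%nat, 0%nat => exp (- (2 * zc p))
  | 1%nat, 1%nat => exp (2 * zc p)
  | 2%nat, 2%nat => 1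
  | _, _ => 0 end.

(* Partial derivatives d_l g_ij(p) (only d_z is nonzero). *)
Definition dgm (l : nat) (p : V3) (i j : nat) : R :=
  match l with
  | 2%nat =>
    match i, j with
    | 0%nat, 0%nat => 2 * exp (2 * zc p)
    | 1%nat, 1%nat => - (2 * exp (- (2 * zc p)))
    | _, _ => 0 end
  | _ => 0 end.

Definition christoffel (p : V3) (k i j : nat) : R :=
  / 2 * sum3 (fun l => ginv p k l * (dgm i p j l + dgm j p i l - dgm l p i j)).

Definition ip (p : V3) (u v : V3) : R :=
  sum3 (fun i => sum3 (fun j => gm p i j * comp u i * comp v j)).

Definition mkV (F : nat -> R) : V3 := (F 0%nat, F 1%nat, F 2%nat).

(* Covariant derivative along the surface:
   (nabla_{X_a} X_b)^k = X_ab^k + Gamma^k_ij X_a^i X_b^j. *)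
Definition cov (p : V3) (Xa Xb Xab : V3) : V3 :=
  mkV (fun k => comp Xab k +
         sum3 (fun i => sum3 (fun j => christoffel p k i j * comp Xa i * comp Xb j))).

Definition cross (u v : V3) : V3 :=
  mkV (fun k => match k with
        | 0%nat => comp u 1 * comp v 2 - comp u 2 * comp v 1
        | 1%nat => comp u 2 * comp v 0 - comp u 0 * comp v 2
        | _ => comp u 0 * comp v 1 - comp u 1 * comp v 0 end).

(* A normal vector: nu^k = g^kl (Xs x Xt)_l, which is g-orthogonal to Xs, Xt. *)
Definition normal_vec (p : V3) (Xs Xt : V3) : V3 :=
  mkV (fun k => sum3 (fun l => ginv p k l * comp (cross Xs Xt) l)).

Definition unit_normal (p : V3) (Xs Xt : V3) : V3 :=
  let nu := normal_vec p Xs Xt in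
  let n := sqrt (ip p nu nu) in
  mkV (fun k => comp nu k / n).

(* Mean curvature at a point, from the point p = X(s,t), first partials Xs Xt
   and second partials Xss Xst Xtt:
   H = (E n - 2 F m + G l) / (2 (E G - F^2)), l,m,n the second fundamental form
   w.r.t. the unit normal (half the trace of the Weingarten map). *)
Definition first_E (p Xs Xt : V3) := ip p Xs Xs.
Definition first_F (p Xs Xt : V3) := ip p Xs Xt.
Definition first_G (p Xs Xt : V3) := ip p Xt Xt.

Definition mean_curv (p Xs Xt Xss Xst Xtt : V3) : R :=
  let N := unit_normal p Xs Xt in
  let E := ip p Xs Xs in
  let F := ip p Xs Xt in
  let G := ip p Xt Xt in
  let l := ip p (cov p Xs Xs Xss) N in
  let m := ip p (cov p Xs Xt Xst) N in
  let n := ip p (cov p Xt Xt Xtt) N in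
  (E * n - 2 * F * m + G * l) / (2 * (E * G - F * F)).

Definition is_pd_s (X Y : R -> R -> V3) (U : R -> R -> Prop) : Prop :=
  forall s t, U s t -> forall k : nat,
    derivable_pt_lim (fun s' => comp (X s' t) k) s (comp (Y s t) k).
Definition is_pd_t (X Y : R -> R -> V3) (U : R -> R -> Prop) : Prop :=
  forall s t, U s t -> forall k : nat,
    derivable_pt_lim (fun t' => comp (X s t') k) t (comp (Y s t) k).

Definition regular_at (p Xs Xt : V3) : Prop :=
  ip p Xs Xs * ip p Xt Xt - ip p Xs Xt * ip p Xs Xt <> 0.

Definition minimal_on (X : R -> R -> V3) (U : R -> R -> Prop) : Prop :=
  exists Xs Xt Xss Xst Xtt : R -> R -> V3,
    is_pd_s X Xs U /\ is_pd_t X Xt U /\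
    is_pd_s Xs Xss U /\ is_pd_t Xs Xst U /\ is_pd_t Xt Xtt U /\
    forall s t, U s t -> regular_at (X s t) (Xs s t) (Xt s t) ->
      mean_curv (X s t) (Xs s t) (Xt s t) (Xss s t) (Xst s t) (Xtt s t) = 0.

Definition is_open_interval (I : R -> Prop) : Prop :=
  (exists x, I x) /\
  (forall x y z, I x -> I z -> x <= y <= z -> I y) /\
  (forall x, I x -> exists e, 0 < e /\ forall y, Rabs (y - x) < e -> I y).

Definition smooth_on (f : R -> R) (I : R -> Prop) : Prop :=
  exists D : nat -> R -> R, D 0%nat = f /\
    forall n x, I x -> derivable_pt_lim (D n) x (D (S n) x).

Definition rect (I J : R -> Prop) : R -> R -> Prop := fun s t => I s /\ J t.

Definition transl_surface (f g : R -> R) : R -> R -> V3 :=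
  fun s t => sol_mul (s, 0, f s) (0, t, g t).

(* Main.v *)
Require Import Defs.
From Stdlib Require Import Reals Lra.
Open Scope R_scope.

Lemma dl_eq f x l l' : derivable_pt_lim f x l -> l = l' -> derivable_pt_lim f x l'.
Proof. intros H ->; exact H. Qed.
Lemma dl_plus f g x a b : derivable_pt_lim f x a -> derivable_pt_lim g x b ->
  derivable_pt_lim (fun y => f y + g y) x (a + b).
Proof. intros; apply (derivable_pt_lim_plus f g); auto. Qed.
Lemma dl_mult f g x a b : derivable_pt_lim f x a -> derivable_pt_lim g x b ->
  derivable_pt_lim (fun y => f y * g y) x (a * g x + f x * b).
Proof. intros; apply (derivable_pt_lim_mult f g); auto. Qed.
Lemma dl_const c x : derivable_pt_lim (fun _ => c) x 0.
Proof. apply (derivable_pt_lim_const c). Qed.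
Lemma dl_id x : derivable_pt_lim (fun y => y) x 1.
Proof. apply derivable_pt_lim_id. Qed.
Lemma dl_exp f x l : derivable_pt_lim f x l -> derivable_pt_lim (fun y => exp (f y)) x (exp (f x) * l).
Proof. intros; apply (derivable_pt_lim_comp f exp); auto. apply derivable_pt_lim_exp. Qed.
Lemma dl_opp f x l : derivable_pt_lim f x l -> derivable_pt_lim (fun y => - f y) x (- l).
Proof. intros; apply (derivable_pt_lim_opp f); auto. Qed.
Lemma dl_inv f x l : derivable_pt_lim f x l -> f x <> 0 ->
  derivable_pt_lim (fun y => / f y) x (- l / (f x * f x)).
Proof. intros H Hn.
  apply derivable_pt_lim_ext with (f := fun y => 1 / f y). { intros; unfold Rdiv; ring. }
  eapply dl_eq. apply (derivable_pt_lim_div (fun _ => 1) f); [apply dl_const|exact H|exact Hn].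
  unfold Rsqr; field; auto. Qed.

Lemma dl_local f h x l e : 0 < e -> (forall y, Rabs (y - x) < e -> f y = h y) ->
  derivable_pt_lim h x l -> derivable_pt_lim f x l.
Proof.
  intros He Hfh Hd eps Heps. destruct (Hd eps Heps) as [d Hdl].
  assert (Hm : 0 < Rmin d e) by (apply Rmin_pos; [apply cond_pos|exact He]).
  exists (mkposreal _ Hm). intros k Hk Hk2. simpl in Hk2.
  rewrite (Hfh (x + k)), (Hfh x).
  - apply Hdl; auto. eapply Rlt_le_trans; [exact Hk2|apply Rmin_l].
  - rewrite Rminus_diag, Rabs_R0; exact He.
  - replace (x + k - x) with k by ring. eapply Rlt_le_trans; [exact Hk2|apply Rmin_r].
Qed.

Definition openI (U : R -> Prop) := forall x, U x -> exists e, 0 < e /\ forall y, Rabs (y - x) < e -> U y.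

Lemma deriv_val (U : R -> Prop) (D : nat -> R -> R) n h x l :
  openI U -> U x -> (forall y, U y -> derivable_pt_lim (D n) y (D (S n) y)) ->
  (forall y, U y -> D n y = h y) -> derivable_pt_lim h x l -> D (S n) x = l.
Proof.
  intros Ho Hx Hd Heq Hh. destruct (Ho x Hx) as [e [He Hy]].
  apply (uniqueness_limite (D n) x). apply Hd; auto.
  apply (dl_local _ h x l e); auto.
Qed.

Lemma dl_lnabs c x : x + c <> 0 -> derivable_pt_lim (fun y => ln (Rabs (y + c))) x (/ (x + c)).
Proof.
  intros Hn. destruct (Rlt_or_le 0 (x + c)) as [Hp|Hp].
  - apply (dl_local _ (fun y => ln (y + c)) x _ (x + c)); auto.
    + intros y Hy. rewrite Rabs_pos_eq; auto. apply Rabs_def2 in Hy. lra.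
    + eapply dl_eq. apply (derivable_pt_lim_comp (fun y => y + c) ln).
      apply dl_plus. apply dl_id. apply dl_const.
      apply derivable_pt_lim_ln; auto. field; auto.
  - assert (Hq : 0 < - (x + c)) by lra.
    apply (dl_local _ (fun y => ln (- (y + c))) x _ (- (x + c))); auto.
    + intros y Hy. rewrite Rabs_left; auto. apply Rabs_def2 in Hy. lra.
    + eapply dl_eq. apply (derivable_pt_lim_comp (fun y => - (y + c)) ln).
      apply dl_opp. apply dl_plus. apply dl_id. apply dl_const.
      apply derivable_pt_lim_ln; auto. field. lra.
Qed.

Definition numer (f1 f2 g1 g2 t ef A : R) :=
 let w := ef*ef / A in
 let l := 2*f1*f1*ef*(t*g1-1) - t*ef*(f2 - f1*f1)*g1 + ef*(f2 - A + t*t*f1*f1*w) in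
 let m := ef*f1*(2*t*g1*g1 - g1 + t*w) in
 let n := ef*(2*g1*g1 + g2 + w) in
 let E := A + t*t*f1*f1*w + f1*f1 in
 let F := t*f1*w + f1*g1 in
 let G := w + g1*g1 in E*n - 2*F*m + G*l.

Lemma mc_transl (f1 f2 g1 g2 t x fs gt : R) :
  numer f1 f2 g1 g2 t (exp fs) ((exp fs * exp gt)^2) = 0 ->
  mean_curv (x + exp (- fs) * 0, 0 + exp fs * t, fs + gt)
     (1, t * f1 * exp fs, f1) (0, exp fs, g1)
     (0, t * (f2 * exp fs + f1 * (f1 * exp fs)), f2) (0, f1 * exp fs, 0) (0, 0, g2) = 0.
Proof.
  intros Hn.
  unfold mean_curv, unit_normal, normal_vec, cross, cov, christoffel, ip, mkV, sum3, gm, ginv, dgm, zc.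
  cbv beta iota zeta delta [Defs.comp].
  assert (HA : exp (2 * (fs + gt)) = (exp fs * exp gt)^2).
  { rewrite <- exp_plus. replace (2 * (fs+gt)) with ((fs+gt)+(fs+gt)) by ring. rewrite exp_plus. ring. }
  rewrite exp_Ropp, HA.
  set (A := (exp fs * exp gt)^2) in *.
  assert (HAp : 0 < A) by (unfold A; apply pow_lt; apply Rmult_lt_0_compat; apply exp_pos).
  unfold Rdiv. set (q := / sqrt _).
  set (ef := exp fs) in *.

  match goal with |- ?N * _ = 0 => replace N with (q * numer f1 f2 g1 g2 t ef A) end.
  - rewrite Hn. cbv beta; ring.
  - unfold numer. field. lra.
Qed.

Lemma mc_plane (g1 g2 t x0 s gt : R) :
  mean_curv (x0 + exp (- s) * 0, 0 + exp s * t, s + gt)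
     (0, t * exp s, 1) (0, exp s, g1)
     (0, t * exp s, 0) (0, exp s, 0) (0, 0, g2) = 0.
Proof.
  unfold mean_curv, unit_normal, normal_vec, cross, cov, christoffel, ip, mkV, sum3, gm, ginv, dgm, zc.
  cbv beta iota zeta delta [Defs.comp]. unfold Rdiv.
  match goal with |- ?N * _ = 0 => replace N with 0 by ring end; cbv beta; ring.
Qed.

Lemma transl_min I J f g (Df Dg : nat -> R -> R) :
  Df 0%nat = f -> Dg 0%nat = g ->
  (forall n x, I x -> derivable_pt_lim (Df n) x (Df (S n) x)) ->
  (forall n x, J x -> derivable_pt_lim (Dg n) x (Dg (S n) x)) ->
  (forall s t, I s -> J t -> numer (Df 1%nat s) (Df 2%nat s) (Dg 1%nat t) (Dg 2%nat t) t
      (exp (f s)) ((exp (f s) * exp (g t))^2) = 0) ->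
  minimal_on (transl_surface f g) (rect I J).
Proof.
  intros Hf0 Hg0 HDf HDg Hn.
  exists (fun s t => (1, t * Df 1%nat s * exp (f s), Df 1%nat s)),
         (fun s t => (0, exp (f s), Dg 1%nat t)),
         (fun s t => (0, t * (Df 2%nat s * exp (f s) + Df 1%nat s * (Df 1%nat s * exp (f s))), Df 2%nat s)),
         (fun s t => (0, Df 1%nat s * exp (f s), 0)),
         (fun s t => (0, 0, Dg 2%nat t)).
  assert (F1 : forall s, I s -> derivable_pt_lim f s (Df 1%nat s)) by (intros; rewrite <- Hf0; auto).
  assert (G1 : forall t, J t -> derivable_pt_lim g t (Dg 1%nat t)) by (intros; rewrite <- Hg0; auto).
  repeat split; intros s t [Hs Ht]; try intros k;
    try (destruct k as [|[|k]]; cbv beta iota delta [transl_surface sol_mul Defs.comp]).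
  - eapply dl_eq. apply dl_plus; [apply dl_id| apply dl_mult; [apply dl_exp, dl_opp, F1; auto|apply dl_const]]. cbv beta; ring.
  - eapply dl_eq. apply dl_plus; [apply dl_const| apply dl_mult; [apply dl_exp, F1; auto|apply dl_const]]. cbv beta; ring.
  - eapply dl_eq. apply dl_plus; [apply F1; auto|apply dl_const]. cbv beta; ring.
  - apply dl_const.
  - eapply dl_eq. apply dl_plus; [apply dl_const| apply dl_mult; [apply dl_const|apply dl_id]]. cbv beta; ring.
  - eapply dl_eq. apply dl_plus; [apply dl_const|apply G1; auto]. cbv beta; ring.
  - apply dl_const.
  - eapply dl_eq. apply dl_mult; [apply dl_mult; [apply dl_const|apply HDf; auto]|apply dl_exp, F1; auto]. cbv beta; ring.
  - apply HDf; auto.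
  - apply dl_const.
  - eapply dl_eq. apply dl_mult; [apply dl_mult; [apply dl_id|apply dl_const]|apply dl_const]. cbv beta; ring.
  - apply dl_const.
  - apply dl_const.
  - apply dl_const.
  - apply HDg; auto.
  - unfold transl_surface, sol_mul. apply mc_transl. auto.
Qed.

Lemma plane_min x0 I J g (Dg : nat -> R -> R) :
  Dg 0%nat = g ->
  (forall n x, J x -> derivable_pt_lim (Dg n) x (Dg (S n) x)) ->
  minimal_on (fun s t => sol_mul (x0, 0, s) (0, t, g t)) (rect I J).
Proof.
  intros Hg0 HDg.
  exists (fun s t => (0, t * exp s, 1)), (fun s t => (0, exp s, Dg 1%nat t)),
         (fun s t => (0, t * exp s, 0)), (fun s t => (0, exp s, 0)), (fun s t => (0, 0, Dg 2%nat t)).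
  assert (G1 : forall t, J t -> derivable_pt_lim g t (Dg 1%nat t)) by (intros; rewrite <- Hg0; auto).
  repeat split; intros s t [Hs Ht]; try intros k;
    try (destruct k as [|[|k]]; cbv beta iota delta [sol_mul Defs.comp]).
  all: try apply dl_const.
  all: try (apply HDg; auto).
  all: try (eapply dl_eq; [apply dl_plus; [apply dl_const| apply dl_mult; [apply dl_const|apply dl_id]]|cbv beta; ring]).
  all: try (eapply dl_eq; [apply dl_plus; [apply dl_const| apply dl_mult; [apply dl_exp, dl_id|apply dl_const]]|cbv beta; ring]).
  all: try (eapply dl_eq; [apply dl_plus; [apply dl_id|apply dl_const]|cbv beta; ring]).
  all: try (eapply dl_eq; [apply dl_plus; [apply dl_const|apply G1; auto]|cbv beta; ring]).
  all: try (eapply dl_eq; [apply dl_plus; [apply dl_const| apply dl_mult; [apply dl_mult; [apply dl_const|apply dl_exp, dl_opp, dl_id]|apply dl_const]]|cbv beta; ring]).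
  all: try (eapply dl_eq; [apply dl_mult; [apply dl_const|apply dl_exp, dl_id]|cbv beta; ring]).
  all: try (eapply dl_eq; [apply dl_mult; [apply dl_id|apply dl_const]|cbv beta; ring]).
  all: try (apply mc_plane).
  eapply dl_eq; [apply dl_plus; [apply dl_const| apply dl_mult; [apply dl_exp, dl_opp, dl_id|apply dl_const]]|cbv beta; ring].
Qed.

Lemma oi_open U : is_open_interval U -> openI U.
Proof. intros [_ [_ H]]; exact H. Qed.

Lemma exp_lnabs u m : u <> 0 -> exp (ln (Rabs u) + m) = Rabs u * exp m.
Proof. intros Hu. rewrite exp_plus, exp_ln; auto. apply Rabs_pos_lt; auto. Qed.

Lemma exp_mlnabs u m : u <> 0 -> exp (- ln (Rabs u) + m) = / Rabs u * exp m.
Proof. intros Hu. rewrite exp_plus, exp_Ropp, exp_ln; auto. apply Rabs_pos_lt; auto. Qed.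

Lemma abs_cases u : u <> 0 -> Rabs u = u \/ Rabs u = - u.
Proof. intros. destruct (Rcase_abs u); [right; apply Rabs_left|left; apply Rabs_right]; auto. Qed.

Theorem case1 : forall (I J : R -> Prop) (f g : R -> R) (a lam mu : R),
     is_open_interval I -> is_open_interval J -> smooth_on f I -> smooth_on g J ->
     ~ J (- lam) ->
     (forall s, I s -> f s = a) ->
     (forall t, J t -> g t = ln (Rabs (t + lam)) + mu) ->
     minimal_on (transl_surface f g) (rect I J).
Proof.
  intros I J f g a lam mu HI HJ [Df [Hf0 HDf]] [Dg [Hg0 HDg]] Hl Hf Hg.
  apply (transl_min I J f g Df Dg); auto.
  intros s t Hs Ht.
  assert (Hu : t + lam <> 0) by (intro E; apply Hl; replace (- lam) with t by lra; auto).
  assert (D1 : forall y, I y -> Df 1%nat y = 0).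
  { intros y Hy. apply (deriv_val I Df 0 (fun _ => a) y 0); auto using oi_open.
    - intros; rewrite Hf0; auto.
    - apply dl_const. }
  assert (D2 : Df 2%nat s = 0).
  { apply (deriv_val I Df 1 (fun _ => 0) s 0); auto using oi_open. apply dl_const. }
  assert (E1 : forall y, J y -> Dg 1%nat y = / (y + lam)).
  { intros y Hy.
    assert (Hv : y + lam <> 0) by (intro E; apply Hl; replace (- lam) with y by lra; auto).
    apply (deriv_val J Dg 0 (fun y => ln (Rabs (y + lam)) + mu) y); auto using oi_open.
    - intros; rewrite Hg0; auto.
    - eapply dl_eq. apply dl_plus. apply dl_lnabs; auto. apply dl_const. ring. }
  assert (E2 : Dg 2%nat t = - / ((t + lam) * (t + lam))).
  { apply (deriv_val J Dg 1 (fun y => / (y + lam)) t); auto using oi_open.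
    eapply dl_eq. apply dl_inv; auto. apply dl_plus. apply dl_id. apply dl_const. cbv beta. field; auto. }
  rewrite D1, D2, E1, E2, Hf, Hg, exp_lnabs; auto.
  pose proof (exp_pos a). pose proof (exp_pos mu).
  unfold numer. destruct (abs_cases _ Hu) as [R|R]; rewrite R; field; repeat split; lra.
Qed.

Theorem case2 : forall (I J : R -> Prop) (f g : R -> R) (a lam mu : R),
     is_open_interval I -> is_open_interval J -> smooth_on f I -> smooth_on g J ->
     ~ I (- lam) ->
     (forall s, I s -> f s = - ln (Rabs (s + lam)) + mu) ->
     (forall t, J t -> g t = a) ->
     minimal_on (transl_surface f g) (rect I J).
Proof.
  intros I J f g a lam mu HI HJ [Df [Hf0 HDf]] [Dg [Hg0 HDg]] Hl Hf Hg.
  apply (transl_min I J f g Df Dg); auto.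
  intros s t Hs Ht.
  assert (Hu : s + lam <> 0) by (intro E; apply Hl; replace (- lam) with s by lra; auto).
  assert (D1 : forall y, J y -> Dg 1%nat y = 0).
  { intros y Hy. apply (deriv_val J Dg 0 (fun _ => a) y 0); auto using oi_open.
    - intros; rewrite Hg0; auto.
    - apply dl_const. }
  assert (D2 : Dg 2%nat t = 0).
  { apply (deriv_val J Dg 1 (fun _ => 0) t 0); auto using oi_open. apply dl_const. }
  assert (E1 : forall y, I y -> Df 1%nat y = - / (y + lam)).
  { intros y Hy.
    assert (Hv : y + lam <> 0) by (intro E; apply Hl; replace (- lam) with y by lra; auto).
    apply (deriv_val I Df 0 (fun y => - ln (Rabs (y + lam)) + mu) y); auto using oi_open.
    - intros; rewrite Hf0; auto.
    - eapply dl_eq. apply dl_plus. apply dl_opp. apply dl_lnabs; auto. apply dl_const. ring. }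
  assert (E2 : Df 2%nat s = / ((s + lam) * (s + lam))).
  { apply (deriv_val I Df 1 (fun y => - / (y + lam)) s); auto using oi_open.
    eapply dl_eq. apply dl_opp. apply dl_inv; auto. apply dl_plus. apply dl_id. apply dl_const. cbv beta. field; auto. }
  rewrite D1, D2, E1, E2, Hf, Hg, exp_mlnabs; auto.
  pose proof (exp_pos a). pose proof (exp_pos mu).
  unfold numer. destruct (abs_cases _ Hu) as [R|R]; rewrite R; field; repeat split; lra.
Qed.

Theorem case3 : forall (I J : R -> Prop) (f g : R -> R) (mu : R),
     is_open_interval I -> is_open_interval J -> smooth_on f I -> smooth_on g J ->
     ~ J 0 ->
     (forall t, J t -> g t = ln (Rabs t) + mu) ->
     minimal_on (transl_surface f g) (rect I J).
Proof.
  intros I J f g mu HI HJ [Df [Hf0 HDf]] [Dg [Hg0 HDg]] Hl Hg.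
  apply (transl_min I J f g Df Dg); auto.
  intros s t Hs Ht.
  assert (Hu : t <> 0) by (intro E; apply Hl; rewrite <- E; auto).
  assert (E1 : forall y, J y -> Dg 1%nat y = / (y + 0)).
  { intros y Hy.
    assert (Hv : y + 0 <> 0) by (rewrite Rplus_0_r; intro E; apply Hl; rewrite <- E; auto).
    apply (deriv_val J Dg 0 (fun y => ln (Rabs (y + 0)) + mu) y); auto using oi_open.
    - intros; rewrite Hg0, Rplus_0_r; auto.
    - eapply dl_eq. apply dl_plus. apply dl_lnabs; auto. apply dl_const. ring. }
  assert (E2 : Dg 2%nat t = - / ((t + 0) * (t + 0))).
  { assert (Hv : t + 0 <> 0) by (rewrite Rplus_0_r; auto).
    apply (deriv_val J Dg 1 (fun y => / (y + 0)) t); auto using oi_open.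
    eapply dl_eq. apply dl_inv; auto. apply dl_plus. apply dl_id. apply dl_const. cbv beta. field; auto. }
  rewrite E1, E2, Hg, exp_lnabs; auto.
  pose proof (exp_pos (f s)). pose proof (exp_pos mu).
  unfold numer. destruct (abs_cases _ Hu) as [R|R]; rewrite R; field; repeat split; lra.
Qed.

Theorem case4 : forall (I J : R -> Prop) (f g : R -> R) (a b : R),
     is_open_interval I -> is_open_interval J -> smooth_on f I -> smooth_on g J ->
     (forall s, I s -> f s = a) ->
     (forall t, J t -> g t = b) ->
     minimal_on (transl_surface f g) (rect I J).
Proof.
  intros I J f g a b HI HJ [Df [Hf0 HDf]] [Dg [Hg0 HDg]] Hf Hg.
  apply (transl_min I J f g Df Dg); auto.
  intros s t Hs Ht.
  assert (D1 : forall y, J y -> Dg 1%nat y = 0).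
  { intros y Hy. apply (deriv_val J Dg 0 (fun _ => b) y 0); auto using oi_open.
    - intros; rewrite Hg0; auto.
    - apply dl_const. }
  assert (D2 : Dg 2%nat t = 0).
  { apply (deriv_val J Dg 1 (fun _ => 0) t 0); auto using oi_open. apply dl_const. }
  assert (F1 : forall y, I y -> Df 1%nat y = 0).
  { intros y Hy. apply (deriv_val I Df 0 (fun _ => a) y 0); auto using oi_open.
    - intros; rewrite Hf0; auto.
    - apply dl_const. }
  assert (F2 : Df 2%nat s = 0).
  { apply (deriv_val I Df 1 (fun _ => 0) s 0); auto using oi_open. apply dl_const. }
  rewrite D1, D2, F1, F2, Hf, Hg; auto.
  pose proof (exp_pos a). pose proof (exp_pos b).
  unfold numer. field. lra.
Qed.

Theorem mainTheorem3 :
  (* (1) f constant, g(t) = log|t + lambda| + mu *)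
  (forall (I J : R -> Prop) (f g : R -> R) (a lam mu : R),
     is_open_interval I -> is_open_interval J -> smooth_on f I -> smooth_on g J ->
     ~ J (- lam) ->
     (forall s, I s -> f s = a) ->
     (forall t, J t -> g t = ln (Rabs (t + lam)) + mu) ->
     minimal_on (transl_surface f g) (rect I J)) /\
  (* (2) f(s) = -log|s + lambda| + mu, g constant *)
  (forall (I J : R -> Prop) (f g : R -> R) (a lam mu : R),
     is_open_interval I -> is_open_interval J -> smooth_on f I -> smooth_on g J ->
     ~ I (- lam) ->
     (forall s, I s -> f s = - ln (Rabs (s + lam)) + mu) ->
     (forall t, J t -> g t = a) ->
     minimal_on (transl_surface f g) (rect I J)) /\
  (* (3) g(t) = log|t| + mu, f arbitrary smooth *)
  (forall (I J : R -> Prop) (f g : R -> R) (mu : R),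
     is_open_interval I -> is_open_interval J -> smooth_on f I -> smooth_on g J ->
     ~ J 0 ->
     (forall t, J t -> g t = ln (Rabs t) + mu) ->
     minimal_on (transl_surface f g) (rect I J)) /\
  (* (4) f and g constant *)
  (forall (I J : R -> Prop) (f g : R -> R) (a b : R),
     is_open_interval I -> is_open_interval J -> smooth_on f I -> smooth_on g J ->
     (forall s, I s -> f s = a) ->
     (forall t, J t -> g t = b) ->
     minimal_on (transl_surface f g) (rect I J)) /\
  (* planes x = x0: alpha(s) = (x0,0,s), beta(t) = (0,t,g(t)), g arbitrary *)
  (forall (x0 : R) (I J : R -> Prop) (g : R -> R),
     is_open_interval I -> is_open_interval J -> smooth_on g J ->
     minimal_on (fun s t => sol_mul (x0, 0, s) (0, t, g t)) (rect I J)).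
Proof.
  split; [exact case1|]. split; [exact case2|]. split; [exact case3|]. split; [exact case4|].
  intros x0 I J g _ _ [Dg [Hg0 HDg]]. exact (plane_min x0 I J g Dg Hg0 HDg).
Qed.
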